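(* Let $r,K,\alpha,\phi,c,m_1,m_2,\lambda,a,d,\delta,\gamma,\sigma,\eta$ be positive constants with $\phi<1$ and $m_1>m_2$, and consider the system \[ \begin{cases} \dot X = rX\left(1-\frac{X}{K}\right)-\frac{\alpha XS}{c+X}-\frac{\phi\alpha XI}{c+X},\\[1mm] \dot S = \frac{m_1\alpha XS}{c+X}-\frac{\lambda AS}{a+A}-dS,\\[1mm] \dot I = \frac{m_2\phi\alpha XI}{c+X}+\frac{\lambda AS}{a+A}-(d+\delta)I,\\[1mm] \dot A = \gamma+\sigma(S+I)-\eta A. \end{cases} \] Then the axial equilibrium $E_0=(0,0,0,\gamma/\eta)$ is always unstable. *)

(* Defs.v *)
From Stdlib Require Import Reals.
From Coquelicot Require Import Coquelicot.
Open Scope R_scope.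

Definition fX (r K alpha phi c : R) (X S I A : R) : R :=
  r * X * (1 - X / K) - alpha * X * S / (c + X) - phi * alpha * X * I / (c + X).
Definition fS (alpha c m1 lambda a d : R) (X S I A : R) : R :=
  m1 * alpha * X * S / (c + X) - lambda * A * S / (a + A) - d * S.
Definition fI (alpha phi c m2 lambda a d delta : R) (X S I A : R) : R :=
  m2 * phi * alpha * X * I / (c + X) + lambda * A * S / (a + A) - (d + delta) * I.
Definition fA (gamma sigma eta : R) (X S I A : R) : R :=
  gamma + sigma * (S + I) - eta * A.

Definition dist4 (x1 x2 x3 x4 y1 y2 y3 y4 : R) : R :=
  sqrt ((x1 - y1)^2 + (x2 - y2)^2 + (x3 - y3)^2 + (x4 - y4)^2).

Definition is_forward_solution
  (r K alpha phi c m1 m2 lambda a d delta gamma sigma eta : R)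
  (X S I A : R -> R) : Prop :=
  forall t, 0 <= t ->
    is_derive X t (fX r K alpha phi c (X t) (S t) (I t) (A t)) /\
    is_derive S t (fS alpha c m1 lambda a d (X t) (S t) (I t) (A t)) /\
    is_derive I t (fI alpha phi c m2 lambda a d delta (X t) (S t) (I t) (A t)) /\
    is_derive A t (fA gamma sigma eta (X t) (S t) (I t) (A t)).

Definition lyapunov_unstable
  (r K alpha phi c m1 m2 lambda a d delta gamma sigma eta : R)
  (e1 e2 e3 e4 : R) : Prop :=
  exists eps, 0 < eps /\
   forall del, 0 < del ->
   exists X S I A : R -> R,
     is_forward_solution r K alpha phi c m1 m2 lambda a d delta gamma sigma eta X S I A /\
     dist4 (X 0) (S 0) (I 0) (A 0) e1 e2 e3 e4 < del /\
     exists t, 0 <= t /\ eps <= dist4 (X t) (S t) (I t) (A t) e1 e2 e3 e4.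

(* Main.v *)
Require Import Defs.
From Stdlib Require Import Reals Lra.
From Coquelicot Require Import Coquelicot.
Open Scope R_scope.

Lemma sqrt_sq_simp (x g : R) : 0 <= x ->
  dist4 x 0 0 g 0 0 0 g = x.
Proof.
  intros Hx. unfold dist4.
  replace ((x - 0) ^ 2 + (0 - 0) ^ 2 + (0 - 0) ^ 2 + (g - g) ^ 2) with (x * x) by ring.
  apply sqrt_square; auto.
Qed.

Theorem theorem2
  (r K alpha phi c m1 m2 lambda a d delta gamma sigma eta : R)
  (Hr : 0 < r) (HK : 0 < K) (Halpha : 0 < alpha) (Hphi : 0 < phi) (Hc : 0 < c)
  (Hm1 : 0 < m1) (Hm2 : 0 < m2) (Hlambda : 0 < lambda) (Ha : 0 < a) (Hd : 0 < d)
  (Hdelta : 0 < delta) (Hgamma : 0 < gamma) (Hsigma : 0 < sigma) (Heta : 0 < eta)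
  (Hphi1 : phi < 1) (Hm12 : m2 < m1) :
  lyapunov_unstable r K alpha phi c m1 m2 lambda a d delta gamma sigma eta
    0 0 0 (gamma / eta).
Proof.
  exists (K / 2). split; [lra|].
  intros del Hdel.
  set (x0 := Rmin (del / 2) (K / 2)).
  assert (Hx0 : 0 < x0) by (unfold x0; apply Rmin_glb_lt; lra).
  assert (Hx0K : x0 <= K / 2) by (unfold x0; apply Rmin_r).
  assert (Hx0d : x0 <= del / 2) by (unfold x0; apply Rmin_l).
  assert (HD : forall t, 0 < K - x0 + x0 * exp (r * t)).
  { intro t. pose proof (exp_pos (r * t)). nra. }
  exists (fun t => K * x0 * exp (r * t) / (K - x0 + x0 * exp (r * t))),
         (fun _ => 0), (fun _ => 0), (fun _ => gamma / eta).
  split; [|split].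
  - intros t _. split; [|split; [|split]].
    + unfold fX. pose proof (HD t).
      auto_derive; [lra|].
      unfold Rdiv; rewrite !Rmult_0_r, !Rmult_0_l, !Rminus_0_r. field. lra.
    + unfold fS. auto_derive; auto. unfold Rdiv; rewrite !Rmult_0_r, !Rmult_0_l; ring.
    + unfold fI. auto_derive; auto. unfold Rdiv; rewrite !Rmult_0_r, !Rmult_0_l; ring.
    + unfold fA. auto_derive; auto. field; lra.
  - simpl. rewrite Rmult_0_r, exp_0.
    replace (K * x0 * 1 / (K - x0 + x0 * 1)) with x0 by (field; lra).
    rewrite sqrt_sq_simp; lra.
  - exists (ln (K / x0) / r). split.
    + apply Rmult_le_pos; [|left; apply Rinv_0_lt_compat; lra].
      rewrite <- ln_1. apply ln_le; [lra|].
      apply (Rmult_le_reg_r x0); [lra|]. unfold Rdiv. rewrite Rmult_assoc, Rinv_l; lra.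
    + replace (r * (ln (K / x0) / r)) with (ln (K / x0)) by (field; lra).
      rewrite exp_ln by (apply Rdiv_lt_0_compat; lra).
      replace (K * x0 * (K / x0) / (K - x0 + x0 * (K / x0))) with (K*K/(2*K - x0))
        by (field; lra).
      rewrite sqrt_sq_simp.
      * apply (Rmult_le_reg_r (2*(2*K - x0))); [lra|].
        unfold Rdiv. field_simplify; [nra|lra].
      * apply Rdiv_le_0_compat; nra.
Qed.
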